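(* Let $e\in\mathfrak{osp}(m|2n)_{\bar0}$ be nilpotent with orthosymplectic partition $(p|q)$, $p=(p_1\ge\cdots\ge p_r)$, $q=(q_1\ge\cdots\ge q_s)$. Then $\dim\mathfrak{osp}(m|2n)^e_{\bar1}=\sum_{i=1}^r\sum_{j=1}^s\min(p_i,q_j)$, which is half of $\dim\mathfrak{gl}(m|2n)^e_{\bar1}$.
   Context: $\mathfrak{osp}(m|2n)\subset\mathfrak{gl}(m|2n)=\mathrm{End}(V_0\oplus V_1)$ is the subalgebra preserving a nondegenerate supersymmetric form $\varphi$ ($V_0\perp V_1$, symmetric on $V_0$, skew on $V_1$): $\mathfrak{osp}(m|2n)_i=\{z\in\mathfrak{gl}(m|2n)_i\mid\varphi(zx,y)=-(-1)^{i\deg x}\varphi(x,zy)\}$. The partition $(p|q)$ consists of the Jordan types of $e|_{V_0}$ and $e|_{V_1}$; $\mathfrak{g}^e$ is the centralizer of $e$. *)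

(* Defs.v *)
From HB Require Import structures.
From mathcomp Require Import all_boot all_order all_algebra.
Set Implicit Arguments. Unset Strict Implicit. Unset Printing Implicit Defensive.
Import Order.TTheory GRing.Theory Num.Theory.
Local Open Scope ring_scope.

(* Superspace V = V_0 (+) V_1, dim V_0 = m, dim V_1 = 2n, realised as column
   vectors 'cV_(m + 2n); the first m coordinates span V_0, the last 2n span V_1. *)

Section Super.
Variables (F : fieldType) (m n : nat).
Local Notation N := (m + 2 * n)%N.

(* homogeneous vectors of parity d (false = even, true = odd) *)
Definition homog_vec (d : bool) (x : 'cV[F]_N) : Prop :=
  if d then usubmx x = 0 else dsubmx x = 0.

Definition homog_mx (i : bool) (z : 'M[F]_N) : Prop :=
  if i then ulsubmx z = 0 /\ drsubmx z = 0
  else ursubmx z = 0 /\ dlsubmx z = 0.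

Definition sbracket (i j : bool) (x y : 'M[F]_N) : 'M[F]_N :=
  x *m y - ((-1) ^+ (i && j)) *: (y *m x).

Definition sform (B0 : 'M[F]_m) (B1 : 'M[F]_(2 * n)) (x y : 'cV[F]_N) : F :=
  (x^T *m block_mx B0 0 0 B1 *m y) 0 0.

Definition osp_part (B0 : 'M[F]_m) (B1 : 'M[F]_(2 * n)) (i : bool)
  (z : 'M[F]_N) : Prop :=
  homog_mx i z /\
  forall (d : bool) (x y : 'cV[F]_N), homog_vec d x ->
    sform B0 B1 (z *m x) y = - ((-1) ^+ (i && d)) * sform B0 B1 x (z *m y).

Definition gl_cent_part (e : 'M[F]_N) (i : bool) (z : 'M[F]_N) : Prop :=
  homog_mx i z /\ sbracket false i e z = 0.

Definition osp_cent_part B0 B1 (e : 'M[F]_N) (i : bool) (z : 'M[F]_N) : Prop :=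
  osp_part B0 B1 i z /\ sbracket false i e z = 0.
End Super.

Definition mx_nilpotent (F : fieldType) (k : nat) (A : 'M[F]_k) : Prop :=
  exists t : nat, iter t (mulmx A) 1%:M = 0.

(* partial sums p_1, p_1+p_2, ..., p_1+...+p_r: the last index (1-based) of each block *)
Definition block_ends (s : seq nat) : seq nat :=
  [seq sumn (take t s) | t <- iota 1 (size s)].

(* direct sum J_{p_1} (+) ... (+) J_{p_r} of nilpotent Jordan blocks (ones on the
   superdiagonal inside each block), as a k x k matrix (meaningful when sumn s = k) *)
Definition jordan_nil (F : fieldType) (s : seq nat) (k : nat) : 'M[F]_k :=
  \matrix_(i < k, j < k)
    ((((j : nat) == i.+1) && ((j : nat) \notin block_ends s)) : nat)%:R.

Definition is_partition (p : seq nat) : Prop :=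
  sorted geq p /\ all (fun a => 0 < a)%N p.

Definition jordan_type (F : fieldType) (k : nat) (A : 'M[F]_k) (p : seq nat) : Prop :=
  is_partition p /\ sumn p = k /\
  exists2 P : 'M[F]_k, P \in unitmx & A = P *m jordan_nil F p k *m invmx P.

(* Main.v *)
Require Import Defs.
From HB Require Import structures.
From mathcomp Require Import all_boot all_order all_algebra.
Import Order.TTheory GRing.Theory Num.Theory.
Local Open Scope ring_scope.
Set Implicit Arguments. Unset Strict Implicit. Unset Printing Implicit Defensive.

Section Gen.
Variable F : fieldType.

Lemma dim_iso (U V : vectType F) (S : {vspace U}) (T : {vspace V})
  (f : 'Hom(U, V)) (g : 'Hom(V, U)) :
  {in S, forall x, f x \in T} -> {in T, forall y, g y \in S} ->
  {in S, forall x, g (f x) = x} -> {in T, forall y, f (g y) = y} ->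
  \dim S = \dim T.
Proof.
move=> fST gTS gf fg; apply/eqP; rewrite eqn_leq; apply/andP; split.
  have: (S <= g @: T)%VS.
    by apply/subvP => x xS; rewrite -(gf x xS); apply: memv_img; exact: fST.
  move/dimvS => h; apply: leq_trans h _; rewrite -(limg_ker_dim g T) leq_addl //.
have: (T <= f @: S)%VS.
  by apply/subvP => x xS; rewrite -(fg x xS); apply: memv_img; exact: gTS.
move/dimvS => h; apply: leq_trans h _; rewrite -(limg_ker_dim f S) leq_addl //.
Qed.

Lemma dim_img_inj (U V : vectType F) (S : {vspace U}) (f : 'Hom(U, V)) (g : 'Hom(V, U)) :
  (forall x, g (f x) = x) -> \dim (f @: S) = \dim S.
Proof.
move=> gf; apply: limg_dim_eq.
have /lker0P/eqP -> : injective f by exact: can_inj gf.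
by rewrite capv0.
Qed.

Lemma dim_sum (U V1 V2 : vectType F) (S1 : {vspace V1}) (S2 : {vspace V2})
  (f1 : 'Hom(V1, U)) (f2 : 'Hom(V2, U)) (g1 : 'Hom(U, V1)) (g2 : 'Hom(U, V2)) :
  (forall x, g1 (f1 x) = x) -> (forall x, g2 (f2 x) = x) -> (forall x, g1 (f2 x) = 0) ->
  \dim (f1 @: S1 + f2 @: S2)%VS = (\dim S1 + \dim S2)%N.
Proof.
move=> g1f1 g2f2 g1f2; rewrite dimv_disjoint_sum ?(dim_img_inj _ g1f1) ?(dim_img_inj _ g2f2) //.
apply/eqP; rewrite -subv0; apply/subvP => y /memv_capP [/memv_imgP [x1 _ ->] /memv_imgP [x2 _ E]].
by rewrite memv0 -[x1]g1f1 E g1f2 linear0.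
Qed.

Definition solv a b (A : 'M[F]_a) (C : 'M[F]_b) : {vspace 'M[F]_(a, b)} :=
  lker (linfun (mulmx A) - linfun (mulmxr C)).

Lemma mem_solv a b (A : 'M[F]_a) (C : 'M[F]_b) X :
  (X \in solv A C) = (A *m X == X *m C).
Proof. by rewrite memv_ker !lfun_simp /= subr_eq0. Qed.

Definition kerp a (A : 'M[F]_a) k : {vspace 'cV[F]_a} := lker (linfun (mulmx (A ^+ k))).

Lemma mem_kerp a (A : 'M[F]_a) k v : (v \in kerp A k) = (A ^+ k *m v == 0).
Proof. by rewrite memv_ker !lfun_simp. Qed.


Definition Jb x : 'M[F]_x := \matrix_(i < x, j < x) ((j : nat) == i.+1)%:R.

Fixpoint Jr (s : seq nat) : 'M[F]_(sumn s) :=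
  match s with
  | [::] => 0
  | x :: s' => block_mx (Jb x) 0 0 (Jr s')
  end.

Lemma block_ends_cons x s : block_ends (x :: s) = x :: map (addn x) (block_ends s).
Proof.
rewrite /block_ends /= take0 addn0; congr (_ :: _).
rewrite (iotaDl 1 1) -!map_comp; apply: eq_map => t /=.
by [].
Qed.

Lemma jordan_nil_cons x s :
  jordan_nil F (x :: s) (x + sumn s) = block_mx (Jb x) 0 0 (jordan_nil F s (sumn s)).
Proof.
apply/matrixP => i j; rewrite -(splitK i) -(splitK j).
case: (split i) => [i'|i']; case: (split j) => [j'|j'] /=.
- rewrite block_mxEul !mxE /= block_ends_cons in_cons (ltn_eqF (ltn_ord j')) /=.
  case: ((j' : nat) == i'.+1) => //=; case: mapP => //= -[y _ Ey].
  by move: (ltn_ord j'); rewrite Ey ltnNge leq_addr.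
- rewrite block_mxEur !mxE /= block_ends_cons in_cons.
  case E: (x + j' == i'.+1) => //=.
  have h := ltn_ord i'; rewrite -(eqP E) in h; move: h.
  by rewrite -{2}(addn0 x) leq_add2l leqn0 => /eqP ->; rewrite addn0 eqxx.
- rewrite block_mxEdl !mxE /=.
  by rewrite (ltn_eqF (leq_trans (ltn_ord j') (leq_trans (leq_addr i' x) (leqnSn _)))).
- rewrite block_mxEdr !mxE /= block_ends_cons in_cons -addnS eqn_add2l.
  case E: ((j' : nat) == i'.+1) => //=.
  rewrite (eqP E); have -> : ((x + i'.+1)%N == x) = false by apply/negbTE; rewrite -[X in _ != X]addn0 eqn_add2l.
  by rewrite /= (mem_map (@addnI x)) -(eqP E).
Qed.

Lemma jn_Jr s : jordan_nil F s (sumn s) = Jr s.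
Proof.
elim: s => [|x s IH] /=; first by apply/matrixP => [[]].
by rewrite jordan_nil_cons IH.
Qed.

Lemma JbX x k (i j : 'I_x) : (Jb x ^+ k) i j = ((j : nat) == (i + k)%N)%:R.
Proof.
elim: k i j => [|k IH] i j.
  by rewrite expr0 mxE addn0 eq_sym.
rewrite exprS -mulmxE mxE.
case: (ltnP i.+1 x) => hi.
  rewrite (bigD1 (Ordinal hi)) //= big1 ?addr0.
    by rewrite !mxE IH /= eqxx mul1r addnS -addSn.
  move=> l hl; rewrite !mxE.
  suff -> : ((l : nat) == i.+1) = false by rewrite mul0r.
  by apply/negbTE; apply: contra hl => /eqP h; apply/eqP/val_inj.
rewrite big1.
  suff -> : ((j : nat) == (i + k.+1)%N) = false by [].
  apply/negbTE; rewrite neq_ltn; apply/orP; left.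
  by apply: (leq_trans (ltn_ord j)); apply: (leq_trans hi); rewrite addnS ltnS leq_addr.
move=> l _; rewrite !mxE.
suff -> : ((l : nat) == i.+1) = false by rewrite mul0r.
by apply/negbTE; rewrite neq_ltn (leq_trans (ltn_ord l)).
Qed.


Lemma JbXx x : Jb x ^+ x = 0.
Proof.
apply/matrixP => i j; rewrite JbX mxE.
suff -> : ((j : nat) == (i + x)%N) = false by [].
by apply/negbTE; rewrite neq_ltn (leq_trans (ltn_ord j)) ?leq_addl.
Qed.

Lemma powJ a b (A : 'M[F]_a) (C : 'M[F]_b) (X : 'M[F]_(a, b)) k :
  A *m X = X *m C -> A ^+ k *m X = X *m C ^+ k.
Proof.
move=> h; elim: k => [|k IH]; first by rewrite !expr0 mul1mx mulmx1.
by rewrite !exprS -!mulmxE -mulmxA IH !mulmxA h.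
Qed.

Lemma blockX a b (A : 'M[F]_a) (B : 'M[F]_b) k :
  (block_mx A 0 0 B) ^+ k = block_mx (A ^+ k) 0 0 (B ^+ k).
Proof.
elim: k => [|k IH]; first by rewrite !expr0 -scalar_mx_block.
rewrite !exprS IH -!mulmxE mulmx_block !mulmx0 !mul0mx !addr0 add0r.
by [].
Qed.

Definition ex x : 'cV[F]_x := \col_(j < x) ((j : nat) == x.-1)%:R.

Definition gfun a x (A : 'M[F]_a) (v : 'cV[F]_a) : 'M[F]_(a, x) :=
  \matrix_(i, c) (A ^+ (x.-1 - c) *m v) i 0.

Fact gfun_lin a x (A : 'M[F]_a) : linear (@gfun a x A).
Proof.
move=> k u v; apply/matrixP => i c; rewrite !mxE big_distrr -big_split /=; apply: eq_bigr => j _.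
by rewrite !mxE mulrDr mulrCA.
Qed.

HB.instance Definition _ a x A := @GRing.isLinear.Build _ _ _ _
  (@gfun a x A) (@gfun_lin a x A).

Lemma gfunE a x (A : 'M[F]_a) v i c : @gfun a x A v i c = (A ^+ (x.-1 - c) *m v) i 0.
Proof. by rewrite mxE. Qed.

Lemma JbX_ex x k (j : 'I_x) : (Jb x ^+ k *m ex x) j 0 = ((j + k)%N == x.-1)%:R.
Proof.
rewrite mxE; case: (ltnP (j + k) x) => hjk.
  rewrite (bigD1 (Ordinal hjk)) //= big1 ?addr0.
    by rewrite JbX !mxE /= eqxx mul1r.
  move=> l hl; rewrite JbX.
  suff -> : ((l : nat) == (j + k)%N) = false by rewrite mul0r.
  by apply/negbTE; apply: contra hl => /eqP h; apply/eqP/val_inj.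
rewrite big1.
  suff -> : ((j + k)%N == x.-1) = false by [].
  apply/negbTE; rewrite neq_ltn; apply/orP; right.
  by apply: leq_trans _ hjk; case: x j => [[]|x0].
move=> l _; rewrite JbX.
suff -> : ((l : nat) == (j + k)%N) = false by rewrite mul0r.
by apply/negbTE; rewrite neq_ltn (leq_trans (ltn_ord l)).
Qed.

Lemma dim_sol_Jb a x (A : 'M[F]_a) : \dim (solv A (Jb x)) = \dim (kerp A x).
Proof.
apply: (@dim_iso _ _ _ _ (linfun (mulmxr (ex x))) (linfun (@gfun a x A))).
- move=> X; rewrite mem_solv mem_kerp lfunE /= => /eqP h.
  by rewrite mulmxA (powJ _ h) JbXx mulmx0 mul0mx.
- move=> v; rewrite mem_kerp mem_solv lfunE /= => /eqP hv.
  apply/eqP/matrixP => i [c hc]; rewrite !mxE.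
  transitivity ((A ^+ (x.-1 - c).+1 *m v) i 0).
    rewrite exprS -mulmxE -mulmxA mxE; apply: eq_bigr => l _; rewrite gfunE //.
  case: c hc => [|c'] hc.
    rewrite big1; first by rewrite subn0 prednK // hv mxE.
    by move=> l _; rewrite [Jb _ _ _]mxE mulr0.
  have hc' : (c' < x)%N by apply: ltnW.
  rewrite (bigD1 (Ordinal hc')) // big1 ?Monoid.simpm.
    rewrite gfunE [Jb _ _ _]mxE eqxx mulr1.
    suff -> : (x.-1 - c')%N = (x.-1 - c'.+1).+1 by [].
    by rewrite -subSn // -ltnS prednK // (leq_ltn_trans _ hc).
  move=> l hl; rewrite [Jb _ _ _]mxE.
  suff -> : (c'.+1 == (l : nat).+1) = false by rewrite mulr0.
  by apply/negbTE; rewrite eqSS; apply: contra hl => /eqP h; apply/eqP/val_inj.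
- move=> X; rewrite mem_solv lfunE /= lfunE /= => /eqP h.
  apply/matrixP => i c; rewrite gfunE mulmxA (powJ _ h) -mulmxA mxE.
  rewrite (bigD1 c) // big1 ?Monoid.simpm.
    by rewrite JbX_ex subnKC ?eqxx ?mulr1 // -ltnS prednK ?(leq_ltn_trans _ (ltn_ord c)).
  move=> j hj; rewrite JbX_ex.
  suff -> : ((j + (x.-1 - c))%N == x.-1) = false by rewrite mulr0.
  apply/negbTE; apply: contra hj => /eqP h1; apply/eqP/val_inj => /=.
  have hcx : (c <= x.-1)%N by rewrite -ltnS prednK ?(leq_ltn_trans _ (ltn_ord c)).
  by apply/eqP; rewrite -(eqn_add2r (x.-1 - c)) h1 subnKC.
- move=> v; rewrite mem_kerp lfunE /= lfunE /= => /eqP hv.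
  case: x hv => [|x'] hv.
    by rewrite expr0 mul1mx in hv; rewrite hv; apply/matrixP => i j; rewrite mxE big_ord0 mxE.
  apply/matrixP => i j; rewrite (ord1 j) mxE (bigD1 ord_max) // big1 ?Monoid.simpm.
    by rewrite gfunE [ex _ _ _]mxE eqxx mulr1 subnn expr0 mul1mx.
  move=> c hc; rewrite [ex _ _ _]mxE.
  suff -> : ((c : nat) == x') = false by rewrite mulr0.
  by apply/negbTE; apply: contra hc => /eqP h; apply/eqP/val_inj.
Qed.


Lemma sol_split a b1 b2 (A : 'M[F]_a) (C1 : 'M[F]_b1) (C2 : 'M[F]_b2) :
  \dim (solv A (block_mx C1 0 0 C2)) = (\dim (solv A C1) + \dim (solv A C2))%N.
Proof.
pose f1 : 'Hom('M[F]_(a, b1), 'M[F]_(a, b1 + b2)) := linfun (mulmxr (row_mx 1%:M (0 : 'M[F]_(b1, b2)))).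
pose f2 : 'Hom('M[F]_(a, b2), 'M[F]_(a, b1 + b2)) := linfun (mulmxr (row_mx (0 : 'M[F]_(b2, b1)) 1%:M)).
pose g1 := linfun (@lsubmx F a b1 b2).
pose g2 := linfun (@rsubmx F a b1 b2).
have f1E X : f1 X = row_mx X 0 by rewrite lfunE /= mul_mx_row mulmx1 mulmx0.
have f2E X : f2 X = row_mx 0 X by rewrite lfunE /= mul_mx_row mulmx1 mulmx0.
suff -> : solv A (block_mx C1 0 0 C2) = (f1 @: solv A C1 + f2 @: solv A C2)%VS.
  apply: (@dim_sum _ _ _ _ _ f1 f2 g1 g2) => X.
  - by rewrite lfunE /= f1E row_mxKl.
  - by rewrite lfunE /= f2E row_mxKr.
  - by rewrite lfunE /= f2E row_mxKl.
apply/vspaceP => X; apply/idP/idP.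
  rewrite mem_solv -{1 2}(hsubmxK X) mul_mx_row mul_row_block !mulmx0 addr0 add0r.
  move=> /eqP /eq_row_mx [h1 h2].
  have -> : X = row_mx (lsubmx X) 0 + row_mx 0 (rsubmx X).
    by rewrite add_row_mx addr0 add0r hsubmxK.
  rewrite -f1E -f2E; apply: memv_add; apply: memv_img; rewrite mem_solv; apply/eqP; [exact: h1 | exact: h2].
move/memv_addP => [y1 /memv_imgP [X1 h1 ->] [y2 /memv_imgP [X2 h2 ->] ->]].
rewrite mem_solv in h1; rewrite mem_solv in h2.
rewrite f1E f2E add_row_mx addr0 add0r mem_solv mul_mx_row mul_row_block.
by rewrite !mulmx0 addr0 add0r (eqP h1) (eqP h2).
Qed.

Lemma ker_split a1 a2 (A1 : 'M[F]_a1) (A2 : 'M[F]_a2) k :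
  \dim (kerp (block_mx A1 0 0 A2) k) = (\dim (kerp A1 k) + \dim (kerp A2 k))%N.
Proof.
pose f1 : 'Hom('cV[F]_a1, 'cV[F]_(a1 + a2)) := linfun (mulmx (col_mx 1%:M (0 : 'M[F]_(a2, a1)))).
pose f2 : 'Hom('cV[F]_a2, 'cV[F]_(a1 + a2)) := linfun (mulmx (col_mx (0 : 'M[F]_(a1, a2)) 1%:M)).
pose g1 := linfun (@usubmx F a1 a2 1).
pose g2 := linfun (@dsubmx F a1 a2 1).
have f1E X : f1 X = col_mx X 0 by rewrite lfunE /= mul_col_mx mul1mx mul0mx.
have f2E X : f2 X = col_mx 0 X by rewrite lfunE /= mul_col_mx mul1mx mul0mx.
suff -> : kerp (block_mx A1 0 0 A2) k = (f1 @: kerp A1 k + f2 @: kerp A2 k)%VS.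
  apply: (@dim_sum _ _ _ _ _ f1 f2 g1 g2) => X.
  - by rewrite lfunE /= f1E col_mxKu.
  - by rewrite lfunE /= f2E col_mxKd.
  - by rewrite lfunE /= f2E col_mxKu.
apply/vspaceP => X; apply/idP/idP.
  rewrite mem_kerp blockX -{1}(vsubmxK X) mul_block_col !mul0mx addr0 add0r.
  rewrite -col_mx0 => /eqP /eq_col_mx [h1 h2].
  have -> : X = col_mx (usubmx X) 0 + col_mx 0 (dsubmx X).
    by rewrite add_col_mx addr0 add0r vsubmxK.
  rewrite -f1E -f2E; apply: memv_add; apply: memv_img; rewrite mem_kerp ?h1 ?h2 //.
move/memv_addP => [y1 /memv_imgP [X1 h1 ->] [y2 /memv_imgP [X2 h2 ->] ->]].
rewrite f1E f2E add_col_mx addr0 add0r mem_kerp blockX mul_block_col.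
rewrite mem_kerp in h1; rewrite mem_kerp in h2.
by rewrite !mul0mx addr0 add0r (eqP h1) (eqP h2) col_mx0.
Qed.


Lemma dim_M0 a (S : {vspace 'M[F]_(a, 0)}) : \dim S = 0%N.
Proof. by have := dimvS (subvf S); rewrite dimvf dim_matrix mulr0 leqn0 => /eqP. Qed.

Lemma dim_V0 (S : {vspace 'cV[F]_0}) : \dim S = 0%N.
Proof. by have := dimvS (subvf S); rewrite dimvf dim_matrix mul0r leqn0 => /eqP. Qed.

Lemma dim_sol_Jr a (A : 'M[F]_a) p :
  \dim (solv A (Jr p)) = (\sum_(x <- p) \dim (kerp A x))%N.
Proof.
elim: p => [|x p IH] /=; first by rewrite big_nil dim_M0.
by rewrite sol_split dim_sol_Jb IH big_cons.
Qed.

Lemma kerp_Jb y k v :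
  (v \in kerp (Jb y) k) = [forall j : 'I_y, (k <= j)%N ==> (v j 0 == 0)].
Proof.
have E (i : 'I_y) : (Jb y ^+ k *m v) i 0 = \sum_(j < y) ((j : nat) == (i + k)%N)%:R * v j 0.
  by rewrite mxE; apply: eq_bigr => j _; rewrite JbX.
rewrite mem_kerp; apply/eqP/forallP.
  move=> h j; apply/implyP => hkj.
  have hi : (j - k < y)%N by apply: leq_ltn_trans (ltn_ord j); apply: leq_subr.
  have := E (Ordinal hi); rewrite h mxE (bigD1 j) // big1 ?Monoid.simpm.
    by rewrite subnK // eqxx mul1r => <-.
  move=> l hl.
  suff -> : ((l : nat) == (j - k + k)%N) = false by rewrite mul0r.
  by rewrite subnK //; apply/negbTE; apply: contra hl => /eqP h1; apply/eqP/val_inj.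
move=> h; apply/matrixP => i c; rewrite (ord1 c) E [RHS]mxE big1 // => j _.
case: eqP => [hj|]; last by rewrite mul0r.
by have /implyP/(_ _)/eqP -> := h j; rewrite ?mulr0 // hj leq_addl.
Qed.

Lemma dim_ker_Jb y k : \dim (kerp (Jb y) k) = minn y k.
Proof.
pose mn := minn y k.
have hmn : (mn <= y)%N by apply: geq_minl.
pose M : 'M[F]_(mn, y) := \matrix_(i, j) ((i : nat) == j)%:R.
have Mv (v : 'cV[F]_y) i : (M *m v) i 0 = v (widen_ord hmn i) 0.
  rewrite mxE (bigD1 (widen_ord hmn i)) // big1 ?Monoid.simpm.
    by rewrite mxE eqxx mul1r.
  move=> j hj; rewrite mxE.
  suff -> : ((i : nat) == j) = false by rewrite mul0r.
  by apply/negbTE; apply: contra hj => /eqP h; apply/eqP/val_inj.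
have MTw1 (w : 'cV[F]_mn) (j : 'I_y) (h : (j < mn)%N) : (M^T *m w) j 0 = w (Ordinal h) 0.
  rewrite mxE (bigD1 (Ordinal h)) // big1 ?Monoid.simpm.
    by rewrite !mxE eqxx mul1r.
  move=> l hl; rewrite !mxE.
  suff -> : ((l : nat) == j) = false by rewrite mul0r.
  by apply/negbTE; apply: contra hl => /eqP h1; apply/eqP/val_inj.
have MTw2 (w : 'cV[F]_mn) (j : 'I_y) : (mn <= j)%N -> (M^T *m w) j 0 = 0.
  move=> h; rewrite mxE big1 // => l _; rewrite !mxE.
  suff -> : ((l : nat) == j) = false by rewrite mul0r.
  by apply/negbTE; rewrite neq_ltn (leq_trans (ltn_ord l)).
have kerE (v : 'cV[F]_y) (j : 'I_y) : v \in kerp (Jb y) k -> (mn <= j)%N -> v j 0 = 0.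
  rewrite kerp_Jb => /forallP /(_ j) /implyP h hj; apply/eqP/h.
  rewrite leqNgt; apply/negP => hjk; move: hj; rewrite leqNgt leq_min ltn_ord hjk.
  by [].
have -> : minn y k = \dim (fullv : {vspace 'cV[F]_mn}) by rewrite dimvf dim_matrix mulr1.
apply: (@dim_iso _ _ _ _ (linfun (mulmx M)) (linfun (mulmx M^T))).
- by move=> v _; apply: memvf.
- move=> w _; rewrite lfunE /= kerp_Jb; apply/forallP => j; apply/implyP => hkj.
  by rewrite MTw2 // (leq_trans (geq_minr _ _)).
- move=> v hv; rewrite !lfunE /=; apply/matrixP => j c; rewrite (ord1 c).
  case: (ltnP j mn) => h; first by rewrite MTw1 Mv; congr (v _ 0); apply/val_inj.
  by rewrite MTw2 // kerE.
- move=> w _; rewrite !lfunE /=; apply/matrixP => i c; rewrite (ord1 c) Mv.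
  by rewrite (MTw1 _ (widen_ord hmn i) (ltn_ord i)); congr (w _ 0); apply/val_inj.
Qed.

Lemma dim_ker_Jr q k : \dim (kerp (Jr q) k) = (\sum_(y <- q) minn y k)%N.
Proof.
elim: q => [|y q IH] /=; first by rewrite big_nil dim_V0.
by rewrite ker_split dim_ker_Jb IH big_cons.
Qed.


Lemma sol_conj a b (A : 'M[F]_a) (C : 'M[F]_b) (P : 'M[F]_a) (Q : 'M[F]_b) :
  P \in unitmx -> Q \in unitmx ->
  \dim (solv (P *m A *m invmx P) (Q *m C *m invmx Q)) = \dim (solv A C).
Proof.
move=> hP hQ.
pose f : 'Hom('M[F]_(a, b), 'M[F]_(a, b)) := (linfun (mulmx (invmx P)) \o linfun (mulmxr Q))%VF.
pose g : 'Hom('M[F]_(a, b), 'M[F]_(a, b)) := (linfun (mulmx P) \o linfun (mulmxr (invmx Q)))%VF.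
have fE X : f X = invmx P *m X *m Q by rewrite comp_lfunE !lfunE /= mulmxA.
have gE X : g X = P *m X *m invmx Q by rewrite comp_lfunE !lfunE /= mulmxA.
apply: (@dim_iso _ _ _ _ f g).
- move=> X; rewrite !mem_solv fE => /eqP h; apply/eqP.
  have := congr1 (fun M => invmx P *m M *m Q) h => /=.
  rewrite !mulmxA mulVmx // mul1mx mulmxKV // => -> //.
- move=> Y; rewrite !mem_solv gE => /eqP h; apply/eqP.
  rewrite !mulmxA mulmxKV // -[P *m A *m Y]mulmxA h !mulmxA.
  by rewrite -[P *m Y *m invmx Q *m Q]mulmxA mulVmx // mulmx1.
- by move=> X _; rewrite fE gE !mulmxA mulmxV // mul1mx mulmxK.
- by move=> Y _; rewrite fE gE !mulmxA mulVmx // mul1mx mulmxKV.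
Qed.

Lemma dim_sol_jordan a b (A : 'M[F]_a) (C : 'M[F]_b) p q :
  jordan_type A q -> jordan_type C p ->
  \dim (solv A C) = (\sum_(x <- p) \sum_(y <- q) minn y x)%N.
Proof.
case=> _ [hq [P hP ->]] [_ [hp [Q hQ ->]]].
rewrite sol_conj //; subst a b; rewrite !jn_Jr dim_sol_Jr.
by apply: eq_bigr => x _; rewrite dim_ker_Jr.
Qed.

End Gen.

Section Main.
Variables (F : fieldType) (m n : nat) (B0 : 'M[F]_m) (B1 : 'M[F]_(2 * n)).
Hypotheses (hB0 : B0^T = B0) (hB0u : B0 \in unitmx)
  (hB1 : B1^T = - B1) (hB1u : B1 \in unitmx).

Lemma sformE (u u' : 'cV[F]_m) (w w' : 'cV[F]_(2 * n)) :
  sform B0 B1 (col_mx u w) (col_mx u' w') = (u^T *m B0 *m u' + w^T *m B1 *m w') 0 0.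
Proof.
by rewrite /sform tr_col_mx mul_row_block !mulmx0 addr0 add0r mul_row_col.
Qed.

Lemma blk_mul (c : 'M[F]_(m, 2 * n)) (b : 'M[F]_(2 * n, m)) (u : 'cV[F]_m) (w : 'cV[F]_(2 * n)) :
  block_mx 0 c b 0 *m col_mx u w = col_mx (c *m w) (b *m u).
Proof. by rewrite mul_block_col !mul0mx add0r addr0. Qed.

Lemma diag_mul (e0 : 'M[F]_m) (e1 : 'M[F]_(2 * n)) (u : 'cV[F]_m) (w : 'cV[F]_(2 * n)) :
  block_mx e0 0 0 e1 *m col_mx u w = col_mx (e0 *m u) (e1 *m w).
Proof. by rewrite mul_block_col !mul0mx add0r addr0. Qed.

Lemma forms_eq0 k l (M : 'M[F]_(k, l)) :
  (forall (u : 'cV[F]_k) (v : 'cV[F]_l), (u^T *m M *m v) 0 0 = 0) -> M = 0.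
Proof.
move=> h; apply/matrixP => i j; have := h (delta_mx i 0) (delta_mx j 0).
rewrite trmx_delta -rowE -colE !mxE => ->; by [].
Qed.

Lemma brE (e0 : 'M[F]_m) (e1 : 'M[F]_(2 * n)) c b :
  sbracket false true (block_mx e0 0 0 e1) (block_mx 0 c b 0)
  = block_mx 0 (e0 *m c - c *m e1) (e1 *m b - b *m e0) 0.
Proof.
rewrite /sbracket /= expr0 scale1r !mulmx_block !mulmx0 !mul0mx !addr0 !add0r.
by rewrite opp_block_mx add_block_mx !oppr0 !addr0.
Qed.

Definition cmap (b : 'M[F]_(2 * n, m)) : 'M[F]_(m, 2 * n) := - (invmx B0 *m b^T *m B1).


Lemma cmapT b : (cmap b)^T = B1 *m b *m invmx B0.
Proof.
rewrite /cmap linearN /= !trmx_mul trmxK hB1 trmx_inv hB0 mulNmx opprK mulmxA.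
by [].
Qed.

Lemma osp_blk b : forall (d : bool) (x y : 'cV[F]_(m + 2 * n)), homog_vec d x ->
  sform B0 B1 (block_mx 0 (cmap b) b 0 *m x) y
  = - ((-1) ^+ (true && d)) * sform B0 B1 x (block_mx 0 (cmap b) b 0 *m y).
Proof.
move=> d x y hx; rewrite -(vsubmxK x) -(vsubmxK y).
case: d hx => /= ->; rewrite !blk_mul !sformE !mulmx0 !trmx0 !mul0mx ?add0r ?addr0.
  rewrite expr1 opprK mul1r trmx_mul cmapT !mulmxA mulmxKV //.
rewrite expr0 mulN1r.
suff -> : (b *m usubmx x)^T *m B1 *m dsubmx y
  = - ((usubmx x)^T *m B0 *m (cmap b *m dsubmx y)) by rewrite mxE.
rewrite /cmap mulNmx mulmxN opprK !mulmxA mulmxK // trmx_mul.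
by [].
Qed.

Lemma osp_conv (z : 'M[F]_(m + 2 * n)) :
  ulsubmx z = 0 -> drsubmx z = 0 ->
  (forall (x y : 'cV[F]_(m + 2 * n)), homog_vec false x ->
     sform B0 B1 (z *m x) y = - ((-1) ^+ (true && false)) * sform B0 B1 x (z *m y)) ->
  ursubmx z = cmap (dlsubmx z).
Proof.
move=> h0 h1 hf.
have zE : z = block_mx 0 (ursubmx z) (dlsubmx z) 0 by rewrite -{1}[z]submxK h0 h1.
have K : ((dlsubmx z)^T *m B1 + B0 *m ursubmx z) = 0.
  apply: forms_eq0 => u w.
  have := hf (col_mx u 0) (col_mx 0 w) (col_mxKd _ _).
  rewrite zE !blk_mul !sformE !mulmx0 ?trmx0 ?mul0mx add0r addr0 expr0 mulN1r => H.
  rewrite (_ : u^T *m _ *m w = (dlsubmx z *m u)^T *m B1 *m w + u^T *m B0 *m (ursubmx z *m w)).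
    by rewrite mxE H addNr.
  by rewrite mulmxDr mulmxDl trmx_mul !mulmxA block_mxKdl block_mxKur.
have : B0 *m ursubmx z = - ((dlsubmx z)^T *m B1) by apply/eqP; rewrite -addr_eq0 addrC K.
move/(congr1 (mulmx (invmx B0))); rewrite mulKmx // => ->.
by rewrite /cmap mulmxN mulmxA.
Qed.

Lemma cmap_comm (e0 : 'M[F]_m) (e1 : 'M[F]_(2 * n)) b :
  e0^T *m B0 = - (B0 *m e0) -> e1^T *m B1 = - (B1 *m e1) ->
  e1 *m b = b *m e0 -> e0 *m cmap b = cmap b *m e1.
Proof.
move=> h0 h1 hb.
have k0 : e0 *m invmx B0 = - (invmx B0 *m e0^T).
  have := congr1 (fun M => invmx B0 *m M *m invmx B0) h0 => /=.
  rewrite mulmxN mulNmx !mulmxA mulVmx // mul1mx mulmxK // => ->.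
  by rewrite opprK.
rewrite /cmap mulmxN mulNmx !mulmxA k0 mulNmx mulNmx opprK.
rewrite -[invmx B0 *m e0^T *m b^T]mulmxA -trmx_mul -hb trmx_mul mulmxA.
by rewrite -!mulmxA h1 !mulmxN mulmxA.
Qed.

End Main.

Definition hU (F : fieldType) m n (B0 : 'M[F]_m) (B1 : 'M[F]_(2 * n))
  (b : 'M[F]_(2 * n, m)) : 'M[F]_(m + 2 * n) := block_mx 0 (cmap B0 B1 b) b 0.
Definition hL (F : fieldType) m n (b : 'M[F]_(2 * n, m)) : 'M[F]_(m + 2 * n) :=
  block_mx 0 0 b 0.
Definition hR (F : fieldType) m n (c : 'M[F]_(m, 2 * n)) : 'M[F]_(m + 2 * n) :=
  block_mx 0 c 0 0.

Fact hU_lin F m n B0 B1 : linear (@hU F m n B0 B1).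
Proof.
move=> k x y; rewrite /hU /cmap scale_block_mx add_block_mx !scaler0 !addr0.
congr block_mx; rewrite linearP /= mulmxDr mulmxDl -scalemxAr -scalemxAl.
by rewrite opprD scalerN.
Qed.
HB.instance Definition _ F m n B0 B1 := @GRing.isLinear.Build _ _ _ _
  (@hU F m n B0 B1) (@hU_lin F m n B0 B1).

Fact hL_lin F m n : linear (@hL F m n).
Proof.
by move=> k x y; rewrite /hL scale_block_mx add_block_mx !scaler0 !addr0.
Qed.
HB.instance Definition _ F m n := @GRing.isLinear.Build _ _ _ _
  (@hL F m n) (@hL_lin F m n).

Fact hR_lin F m n : linear (@hR F m n).
Proof.
by move=> k x y; rewrite /hR scale_block_mx add_block_mx !scaler0 !addr0.
Qed.
HB.instance Definition _ F m n := @GRing.isLinear.Build _ _ _ _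
  (@hR F m n) (@hR_lin F m n).

Definition dls (F : fieldType) m n (z : 'M[F]_(m + 2 * n)) : 'M[F]_(2 * n, m) := dlsubmx z.
Definition urs (F : fieldType) m n (z : 'M[F]_(m + 2 * n)) : 'M[F]_(m, 2 * n) := ursubmx z.
Fact dls_lin F m n : linear (@dls F m n).
Proof. by move=> k x y; apply/matrixP => i j; rewrite /dls !mxE. Qed.
HB.instance Definition _ F m n := @GRing.isLinear.Build _ _ _ _
  (@dls F m n) (@dls_lin F m n).
Fact urs_lin F m n : linear (@urs F m n).
Proof. by move=> k x y; apply/matrixP => i j; rewrite /urs !mxE. Qed.
HB.instance Definition _ F m n := @GRing.isLinear.Build _ _ _ _
  (@urs F m n) (@urs_lin F m n).

Lemma main_gen (F : fieldType) (m n : nat) (B0 : 'M[F]_m) (B1 : 'M[F]_(2 * n))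
  (hB0 : B0^T = B0) (hB0u : B0 \in unitmx)
  (hB1 : B1^T = - B1) (hB1u : B1 \in unitmx)
  (e0 : 'M[F]_m) (e1 : 'M[F]_(2 * n))
  (h0 : e0^T *m B0 = - (B0 *m e0)) (h1 : e1^T *m B1 = - (B1 *m e1))
  (p q : seq nat) (hp : jordan_type e0 p) (hq : jordan_type e1 q) :
  exists U : {vspace 'M[F]_(m + 2 * n)},
  exists W : {vspace 'M[F]_(m + 2 * n)},
    (forall z, z \in U <-> osp_cent_part B0 B1 (block_mx e0 0 0 e1) true z) /\
    (forall z, z \in W <-> gl_cent_part (block_mx e0 0 0 e1) true z) /\
    \dim U = (\sum_(a <- p) \sum_(b <- q) minn a b)%N /\
    (\dim W = 2 * \dim U)%N.
Proof.
have d1 : \dim (solv e1 e0) = (\sum_(a <- p) \sum_(b <- q) minn a b)%N.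
  rewrite (dim_sol_jordan hq hp); apply: eq_bigr => x _; apply: eq_bigr => y _.
  by rewrite minnC.
have d2 : \dim (solv e0 e1) = (\sum_(a <- p) \sum_(b <- q) minn a b)%N.
  by rewrite (dim_sol_jordan hp hq) exchange_big.
have zE (z : 'M[F]_(m + 2 * n)) : ulsubmx z = 0 -> drsubmx z = 0 ->
    z = block_mx 0 (ursubmx z) (dlsubmx z) 0.
  by move=> a b; rewrite -{1}[z]submxK a b.
exists (linfun (@hU F m n B0 B1) @: solv e1 e0)%VS.
exists (linfun (@hL F m n) @: solv e1 e0 + linfun (@hR F m n) @: solv e0 e1)%VS.
split; [|split; [|split]].
- move=> z; split.
    move/memv_imgP => [b hb ->]; rewrite lfunE /= /hU.
    split; first split.
    + by rewrite /= block_mxKul block_mxKdr.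
    + exact: osp_blk.
    + rewrite mem_solv in hb.
      by rewrite brE (cmap_comm hB0u h0 h1 (eqP hb)) (eqP hb) !subrr block_mx0.
  case=> [[[hz0 hz1] hf] hbr].
  have hc := osp_conv hB0u hz0 hz1 (fun x y hx => hf false x y hx).
  rewrite (zE z hz0 hz1) brE in hbr.
  have [_ _ hb _] := eq_block_mx (etrans hbr (esym (block_mx0 _ _ _ _ _))).
  apply/memv_imgP; exists (dlsubmx z); first by rewrite mem_solv (subr0_eq hb).
  by rewrite lfunE /= /hU -hc -zE.
- move=> z; split.
    move/memv_addP => [y1 /memv_imgP [b hb ->] [y2 /memv_imgP [c hc ->] ->]].
    rewrite !lfunE /= /hL /hR add_block_mx !addr0 !add0r.
    rewrite mem_solv in hb; rewrite mem_solv in hc.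
    split; first by rewrite /= block_mxKul block_mxKdr.
    by rewrite brE (eqP hb) (eqP hc) !subrr block_mx0.
  case=> [[hz0 hz1] hbr].
  rewrite (zE z hz0 hz1) brE in hbr.
  have [_ hc hb _] := eq_block_mx (etrans hbr (esym (block_mx0 _ _ _ _ _))).
  apply/memv_addP; exists (linfun (@hL F m n) (dlsubmx z)).
    by apply: memv_img; rewrite mem_solv (subr0_eq hb).
  exists (linfun (@hR F m n) (ursubmx z)).
    by apply: memv_img; rewrite mem_solv (subr0_eq hc).
  by rewrite !lfunE /= /hL /hR add_block_mx !addr0 !add0r -zE.
- rewrite (@dim_img_inj _ _ _ _ _ (linfun (@dls F m n))) ?d1 //.
  by move=> b; rewrite !lfunE /= ?lfunE /= /hU /dls block_mxKdl.
- rewrite (@dim_img_inj _ _ _ _ _ (linfun (@dls F m n))); last first.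
    by move=> b; rewrite !lfunE /= ?lfunE /= /hU /dls block_mxKdl.
  rewrite (@dim_sum _ _ _ _ _ _ _ _ (linfun (@dls F m n))
     (linfun (@urs F m n))).
  + by rewrite d1 d2 mul2n addnn.
  + by move=> b; rewrite !lfunE /= ?lfunE /= /hL /dls block_mxKdl.
  + by move=> c; rewrite !lfunE /= ?lfunE /= /hR /urs block_mxKur.
  + by move=> c; rewrite !lfunE /= ?lfunE /= /hR /dls block_mxKdl.
Qed.

Unset Implicit Arguments. Set Strict Implicit.

Theorem mainTheorem5
  (F : closedFieldType) (hF : [pchar F] =i pred0) (m n : nat)
  (B0 : 'M[F]_m) (B1 : 'M[F]_(2 * n))
  (hB0 : B0^T = B0) (hB0u : B0 \in unitmx)
  (hB1 : B1^T = - B1) (hB1u : B1 \in unitmx)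
  (e : 'M[F]_(m + 2 * n))
  (he : osp_part B0 B1 false e) (hnil : mx_nilpotent e)
  (p q : seq nat)
  (hp : jordan_type (ulsubmx e) p) (hq : jordan_type (drsubmx e) q) :
  exists U : {vspace 'M[F]_(m + 2 * n)},
  exists W : {vspace 'M[F]_(m + 2 * n)},
    (forall z, z \in U <-> osp_cent_part B0 B1 e true z) /\
    (forall z, z \in W <-> gl_cent_part e true z) /\
    \dim U = (\sum_(a <- p) \sum_(b <- q) minn a b)%N /\
    (\dim W = 2 * \dim U)%N.
Proof.
have [[he1 he2] hf] := he.
have eE : e = block_mx (ulsubmx e) 0 0 (drsubmx e) by rewrite -{1}[e]submxK he1 he2.
move: (ulsubmx e) (drsubmx e) eE hp hq => e0 e1 eE hp hq.
subst e.
have h0 : e0^T *m B0 = - (B0 *m e0).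
  apply/eqP; rewrite -addr_eq0; apply/eqP/forms_eq0 => u v.
  have := hf false (col_mx u 0) (col_mx v 0) (col_mxKd _ _).
  rewrite !diag_mul !sformE !mulmx0 ?trmx0 ?mul0mx !addr0 expr0 mulN1r => H.
  rewrite (_ : u^T *m _ *m v = (e0 *m u)^T *m B0 *m v + u^T *m B0 *m (e0 *m v)).
    by rewrite mxE H addNr.
  by rewrite mulmxDr mulmxDl trmx_mul !mulmxA.
have h1 : e1^T *m B1 = - (B1 *m e1).
  apply/eqP; rewrite -addr_eq0; apply/eqP/forms_eq0 => u v.
  have := hf true (col_mx 0 u) (col_mx 0 v) (col_mxKu _ _).
  rewrite !diag_mul !sformE !mulmx0 ?trmx0 ?mul0mx !add0r expr0 mulN1r => H.
  rewrite (_ : u^T *m _ *m v = (e1 *m u)^T *m B1 *m v + u^T *m B1 *m (e1 *m v)).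
    by rewrite mxE H addNr.
  by rewrite mulmxDr mulmxDl trmx_mul !mulmxA.
exact: main_gen.
Qed.
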